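(* For all processes $P,Q$: if $\emptyset\vdash P$ and $P\rightarrow^{\star}Q$, then $Q$ is not an error.
   Context: Let $\mathcal N$ be a countable set of names. Processes are generated by $P,Q ::= 0 \mid P\mid Q \mid (\nu a)P \mid (a)P \mid \alpha.P$, where $(\nu a)P$ is name restriction (binding $a$), $(a)P$ is the authorization scope ($P$ is authorized to act on $a$; $a$ not bound), and prefixes are $\alpha ::= \overline{a}\langle b\rangle$ (output of $b$ on $a$) $\mid a(x)$ (input on $a$, binding $x$) $\mid \overline{a}\langle\!\langle b\rangle\!\rangle$ (send authorization for $b$ on $a$) $\mid a\langle\!\langle b\rangle\!\rangle$ (receive authorization for $b$ on $a$; $b$ not bound). For a name $a$, $\alpha_a$ denotes any prefix of one of these four forms with subject $a$. $(\vec a)P$ abbreviates $(a_1)\cdots(a_m)P$ (possibly empty). Free names: $\mathrm{fn}(0)=\emptyset$, $\mathrm{fn}(P\mid Q)=\mathrm{fn}(P)\cup\mathrm{fn}(Q)$, $\mathrm{fn}((\nu a)P)=\mathrm{fn}(P)\setminus\{a\}$, $\mathrm{fn}((a)P)=\{a\}\cup\mathrm{fn}(P)$, $\mathrm{fn}(\overline{a}\langle b\rangle.P)=\mathrm{fn}(\overline{a}\langle\!\langle b\rangle\!\rangle.P)=\mathrm{fn}(a\langle\!\langle b\rangle\!\rangle.P)=\{a,b\}\cup\mathrm{fn}(P)$, $\mathrm{fn}(a(x).P)=\{a\}\cup(\mathrm{fn}(P)\setminus\{x\})$. $Q\{c/x\}$ is capture-avoiding substitution. Structural congruence $\equiv$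 is the least congruence satisfying: $P\mid 0\equiv P$; $P\mid Q\equiv Q\mid P$; $(P\mid Q)\mid R\equiv P\mid(Q\mid R)$; $(\nu a)0\equiv 0$; $(\nu a)(\nu b)P\equiv(\nu b)(\nu a)P$; $P\mid(\nu a)Q\equiv(\nu a)(P\mid Q)$ if $a\notin\mathrm{fn}(P)$; $\alpha$-convertible processes are congruent; $(a)(b)P\equiv(b)(a)P$; $(a)0\equiv 0$; $(a)(P\mid Q)\equiv(a)P\mid(a)Q$; $(a)(\nu b)P\equiv(\nu b)(a)P$ if $a\neq b$. Reduction $\rightarrow$ is the least relation such that: (comm) $(\vec a_1)(b)\overline{b}\langle c\rangle.P\mid(\vec a_2)(b)b(x).Q\rightarrow(\vec a_1)(b)P\mid(\vec a_2)(b)Q\{c/x\}$; (auth) $(\vec a_1)(b)(c)\overline{b}\langle\!\langle c\rangle\!\rangle.P\mid(\vec a_2)(b)b\langle\!\langle c\rangle\!\rangle.Q\rightarrow(\vec a_1)(b)P\mid(\vec a_2)(b)(c)Q$; if $P\rightarrow Q$ then $P\mid R\rightarrow Q\mid R$, $(\nu a)P\rightarrow(\nu a)Q$ and $(a)P\rightarrow(a)Q$; and if $P\equiv P'\rightarrow Q'\equiv Q$ then $P\rightarrow Q$. $\rightarrow^{\star}$ is the reflexive–transitive closure of $\rightarrow$. Active contexts: $\mathcal C[\cdot] ::= \cdot \mid P\mid\mathcal C[\cdot] \mid (\nu a)\mathcal C[\cdot] \mid (a)\mathcal C[\cdot]$. The predicate $\mathrm{auth}(\mathcal C[\cdot],a)$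 is: $\mathit{false}$ if $\mathcal C[\cdot]=\cdot$; $\mathit{true}$ if $\mathcal C[\cdot]=(a)\mathcal C'[\cdot]$; $\mathrm{auth}(\mathcal C'[\cdot],a)$ if $\mathcal C[\cdot]$ is $(b)\mathcal C'[\cdot]$ with $a\neq b$, $P\mid\mathcal C'[\cdot]$, or $(\nu b)\mathcal C'[\cdot]$. A process $P$ is an error if $P\equiv\mathcal C[\alpha_a.Q]$ for some active context $\mathcal C[\cdot]$, name $a$, prefix $\alpha_a$ and process $Q$ such that either $\mathrm{auth}(\mathcal C[\cdot],a)=\mathit{false}$, or $\alpha_a=\overline{a}\langle\!\langle b\rangle\!\rangle$ and $\mathrm{auth}(\mathcal C[\cdot],b)=\mathit{false}$. The typing judgment $\rho\vdash P$ ($\rho$ a set of names) is the least relation closed under the rules: $\emptyset\vdash 0$; if $\rho_1\vdash P$ and $\rho_2\vdash Q$ then $\rho_1\cup\rho_2\vdash P\mid Q$; if $\rho\vdash P$ and $a\notin\rho$ then $\rho\vdash(\nu a)P$; if $\rho\vdash P$ then $\rho\setminus\{a\}\vdash(a)P$; if $\rho\vdash P$ then $\rho\cup\{a\}\vdash\overline{a}\langle b\rangle.P$; if $\rho\vdash P$ and $x\notin\rho$ then $\rho\cup\{a\}\vdash a(x).P$; if $\rho\vdash P$ and $b\notin\rho$ then $\rho\cup\{a,b\}\vdash\overline{a}\langle\!\langle b\rangle\!\rangle.P$; if $\rho\vdash P$ then $(\rho\setminus\{b\})\cup\{a\}\vdash a\langle\!\langle b\rangle\!\rangle.P$. *)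

(* Defs.v *)
From Stdlib Require Import List Arith PeanoNat.
Import ListNotations.

Definition name := nat.

Inductive prefix : Type :=
| POut  : name -> name -> prefix
| PIn   : name -> name -> prefix   (* a(x), x bound           *)
| PAOut : name -> name -> prefix
| PAIn  : name -> name -> prefix.  (* a<<b>>, b not bound     *)

Definition subj (al : prefix) : name :=
  match al with POut a _ | PIn a _ | PAOut a _ | PAIn a _ => a end.

Inductive proc : Type :=
| Nil  : proc
| Par  : proc -> proc -> proc
| Res  : name -> proc -> proc
| Auth : name -> proc -> proc      (* (a) P, a not bound *)
| Pre  : prefix -> proc -> proc.

Definition auths (l : list name) (P : proc) : proc := fold_right Auth P l.

Fixpoint fn (P : proc) : list name :=
  match P with
  | Nil => []
  | Par P Q => fn P ++ fn Q
  | Res a P => remove Nat.eq_dec a (fn P)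
  | Auth a P => a :: fn P
  | Pre (POut a b) P => a :: b :: fn P
  | Pre (PIn a x) P => a :: remove Nat.eq_dec x (fn P)
  | Pre (PAOut a b) P => a :: b :: fn P
  | Pre (PAIn a b) P => a :: b :: fn P
  end.

Definition swap (a b n : name) : name :=
  if Nat.eqb n a then b else if Nat.eqb n b then a else n.

Definition pswap_pre (a b : name) (al : prefix) : prefix :=
  match al with
  | POut x y => POut (swap a b x) (swap a b y)
  | PIn x y => PIn (swap a b x) (swap a b y)
  | PAOut x y => PAOut (swap a b x) (swap a b y)
  | PAIn x y => PAIn (swap a b x) (swap a b y)
  end.

Fixpoint pswap (a b : name) (P : proc) : proc :=
  match P with
  | Nil => Nil
  | Par P Q => Par (pswap a b P) (pswap a b Q)
  | Res c P => Res (swap a b c) (pswap a b P)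
  | Auth c P => Auth (swap a b c) (pswap a b P)
  | Pre al P => Pre (pswap_pre a b al) (pswap a b P)
  end.

(* capture-avoiding simultaneous renaming: every binder is renamed to a
   name fresh for the images of the free names of its scope *)
Definition fresh (l : list name) : name := S (list_max l).

Definition upd (s : name -> name) (x z : name) : name -> name :=
  fun n => if Nat.eqb n x then z else s n.

Fixpoint ren (s : name -> name) (P : proc) : proc :=
  match P with
  | Nil => Nil
  | Par P Q => Par (ren s P) (ren s Q)
  | Res a P =>
      let z := fresh (map s (remove Nat.eq_dec a (fn P))) in
      Res z (ren (upd s a z) P)
  | Auth a P => Auth (s a) (ren s P)
  | Pre (POut a b) P => Pre (POut (s a) (s b)) (ren s P)
  | Pre (PIn a x) P =>
      let z := fresh (map s (remove Nat.eq_dec x (fn P))) in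
      Pre (PIn (s a) z) (ren (upd s x z) P)
  | Pre (PAOut a b) P => Pre (PAOut (s a) (s b)) (ren s P)
  | Pre (PAIn a b) P => Pre (PAIn (s a) (s b)) (ren s P)
  end.

Definition subst (Q : proc) (c x : name) : proc := ren (upd (fun n => n) x c) Q.

(* structural congruence: least congruence with the listed axioms;
   alpha-conversion is generated by renaming single binders to fresh names *)
Inductive cong : proc -> proc -> Prop :=
| cg_refl  : forall P, cong P P
| cg_sym   : forall P Q, cong P Q -> cong Q P
| cg_trans : forall P Q R, cong P Q -> cong Q R -> cong P R
| cg_par   : forall P P' Q Q', cong P P' -> cong Q Q' -> cong (Par P Q) (Par P' Q')
| cg_res   : forall a P P', cong P P' -> cong (Res a P) (Res a P')
| cg_auth  : forall a P P', cong P P' -> cong (Auth a P) (Auth a P')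
| cg_pre   : forall al P P', cong P P' -> cong (Pre al P) (Pre al P')
| cg_par0  : forall P, cong (Par P Nil) P
| cg_parC  : forall P Q, cong (Par P Q) (Par Q P)
| cg_parA  : forall P Q R, cong (Par (Par P Q) R) (Par P (Par Q R))
| cg_res0  : forall a, cong (Res a Nil) Nil
| cg_resC  : forall a b P, cong (Res a (Res b P)) (Res b (Res a P))
| cg_extr  : forall a P Q, ~ In a (fn P) -> cong (Par P (Res a Q)) (Res a (Par P Q))
| cg_alpha_res : forall a b P, ~ In b (fn (Res a P)) ->
    cong (Res a P) (Res b (pswap a b P))
| cg_alpha_in : forall a x y P, ~ In y (remove Nat.eq_dec x (fn P)) ->
    cong (Pre (PIn a x) P) (Pre (PIn a y) (pswap x y P))
| cg_authC : forall a b P, cong (Auth a (Auth b P)) (Auth b (Auth a P))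
| cg_auth0 : forall a, cong (Auth a Nil) Nil
| cg_authD : forall a P Q, cong (Auth a (Par P Q)) (Par (Auth a P) (Auth a Q))
| cg_authR : forall a b P, a <> b -> cong (Auth a (Res b P)) (Res b (Auth a P)).

Inductive red : proc -> proc -> Prop :=
| r_comm : forall a1 a2 b c x P Q,
    red (Par (auths a1 (Auth b (Pre (POut b c) P)))
             (auths a2 (Auth b (Pre (PIn b x) Q))))
        (Par (auths a1 (Auth b P)) (auths a2 (Auth b (subst Q c x))))
| r_auth : forall a1 a2 b c P Q,
    red (Par (auths a1 (Auth b (Auth c (Pre (PAOut b c) P))))
             (auths a2 (Auth b (Pre (PAIn b c) Q))))
        (Par (auths a1 (Auth b P)) (auths a2 (Auth b (Auth c Q))))
| r_par  : forall P Q R, red P Q -> red (Par P R) (Par Q R)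
| r_res  : forall a P Q, red P Q -> red (Res a P) (Res a Q)
| r_authc : forall a P Q, red P Q -> red (Auth a P) (Auth a Q)
| r_struct : forall P P' Q Q', cong P P' -> red P' Q' -> cong Q' Q -> red P Q.

Inductive red_star : proc -> proc -> Prop :=
| rs_refl : forall P, red_star P P
| rs_step : forall P Q R, red P Q -> red_star Q R -> red_star P R.

Inductive ctx : Type :=
| Hole  : ctx
| CPar  : proc -> ctx -> ctx
| CRes  : name -> ctx -> ctx
| CAuth : name -> ctx -> ctx.

Fixpoint plug (C : ctx) (P : proc) : proc :=
  match C with
  | Hole => P
  | CPar Q C' => Par Q (plug C' P)
  | CRes a C' => Res a (plug C' P)
  | CAuth a C' => Auth a (plug C' P)
  end.

Fixpoint cauth (C : ctx) (a : name) : bool :=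
  match C with
  | Hole => false
  | CAuth b C' => if Nat.eqb a b then true else cauth C' a
  | CPar _ C' => cauth C' a
  | CRes _ C' => cauth C' a
  end.

Definition error (P : proc) : Prop :=
  exists (C : ctx) (al : prefix) (Q : proc),
    cong P (plug C (Pre al Q)) /\
    (cauth C (subj al) = false \/
     exists b, al = PAOut (subj al) b /\ cauth C b = false).

(* typing rho |- P ; sets of names are predicates, each rule's conclusion
   set is given up to extensional equality *)
Inductive typed : (name -> Prop) -> proc -> Prop :=
| t_nil  : forall rho, (forall n, ~ rho n) -> typed rho Nil
| t_par  : forall r1 r2 rho P Q, typed r1 P -> typed r2 Q ->
    (forall n, rho n <-> r1 n \/ r2 n) -> typed rho (Par P Q)
| t_res  : forall rho a P, typed rho P -> ~ rho a -> typed rho (Res a P)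
| t_auth : forall r rho a P, typed r P ->
    (forall n, rho n <-> r n /\ n <> a) -> typed rho (Auth a P)
| t_out  : forall r rho a b P, typed r P ->
    (forall n, rho n <-> r n \/ n = a) -> typed rho (Pre (POut a b) P)
| t_in   : forall r rho a x P, typed r P -> ~ r x ->
    (forall n, rho n <-> r n \/ n = a) -> typed rho (Pre (PIn a x) P)
| t_aout : forall r rho a b P, typed r P -> ~ r b ->
    (forall n, rho n <-> r n \/ n = a \/ n = b) -> typed rho (Pre (PAOut a b) P)
| t_ain  : forall r rho a b P, typed r P ->
    (forall n, rho n <-> (r n /\ n <> b) \/ n = a) -> typed rho (Pre (PAIn a b) P).

(* Main.v *)
Require Import Defs.
From Stdlib Require Import List Arith PeanoNat Lia.
Import ListNotations.

Fixpoint cnt (l : list name) (n : name) : nat :=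
  match l with [] => 0 | x :: l => (if Nat.eqb x n then 1 else 0) + cnt l n end.

Fixpoint remove_one (b : name) (l : list name) : list name :=
  match l with [] => [] | x :: l => if Nat.eqb x b then l else x :: remove_one b l end.

Fixpoint ok (M : list name) (P : proc) : Prop :=
  match P with
  | Nil => True
  | Par P Q => ok M P /\ ok M Q
  | Res a P => ok (remove Nat.eq_dec a M) P
  | Auth a P => ok (a :: M) P
  | Pre al P =>
    match al with
    | POut a b => In a M /\ ok M P
    | PIn a x => In a M /\ ok (remove Nat.eq_dec x M) P
    | PAOut a b => In a M /\ In b M /\ ok (remove_one b M) P
    | PAIn a b => In a M /\ ok (b :: M) P
    end
  end.

Lemma cnt_remove : forall l a n, cnt (remove Nat.eq_dec a l) n = if Nat.eqb n a then 0 else cnt l n.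
Proof.
  induction l as [|x l IH]; intros a n; simpl.
  - destruct (Nat.eqb n a); auto.
  - destruct (Nat.eq_dec a x) as [->|H].
    + rewrite IH. destruct (Nat.eqb_spec n x); destruct (Nat.eqb_spec x n); subst; try congruence; auto.
    + simpl. rewrite IH. destruct (Nat.eqb_spec n a); destruct (Nat.eqb_spec x n); subst; try congruence; auto.
Qed.

Lemma cnt_remove_one : forall l b n, cnt (remove_one b l) n = if Nat.eqb n b then cnt l n - 1 else cnt l n.
Proof.
  induction l as [|x l IH]; intros b n; simpl.
  - destruct (Nat.eqb n b); auto.
  - destruct (Nat.eqb_spec x b) as [->|H].
    + destruct (Nat.eqb_spec n b); destruct (Nat.eqb_spec b n); subst; try congruence; lia.
    + simpl. rewrite IH. destruct (Nat.eqb_spec n b); destruct (Nat.eqb_spec x n); subst; try congruence;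
      try lia.
Qed.

Lemma In_cnt : forall l n, In n l <-> 0 < cnt l n.
Proof.
  induction l as [|x l IH]; intros n; simpl. split; [tauto|lia].
  rewrite IH. destruct (Nat.eqb_spec x n); split; intros; try lia; intuition.
Qed.

Lemma swap_invol : forall a b n, swap a b (swap a b n) = n.
Proof.
  intros a b n; unfold swap.
  destruct (Nat.eqb_spec n a); destruct (Nat.eqb_spec n b); subst;
  repeat match goal with |- context [?x =? ?y] => destruct (Nat.eqb_spec x y) end; subst; congruence.
Qed.

Lemma swap_eqb : forall a b x n, Nat.eqb (swap a b x) n = Nat.eqb x (swap a b n).
Proof.
  intros a b x n.
  destruct (Nat.eqb_spec x (swap a b n)) as [->|H].
  - rewrite swap_invol. apply Nat.eqb_refl.
  - apply Nat.eqb_neq. intro E. apply H. rewrite <- E, swap_invol. auto.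
Qed.

Lemma cnt_swap : forall l a b n, cnt (map (swap a b) l) n = cnt l (swap a b n).
Proof.
  induction l; intros; simpl; auto. rewrite swap_eqb, IHl. auto.
Qed.

Lemma cnt_notin : forall l n, ~ In n l -> cnt l n = 0.
Proof. intros l n H. destruct (cnt l n) eqn:E; auto. exfalso; apply H, In_cnt; lia. Qed.

Lemma ok_mono_fn : forall P M M', (forall n, In n (fn P) -> cnt M n <= cnt M' n) -> ok M P -> ok M' P.
Proof.
  induction P as [|P1 IH1 P2 IH2|a P IH|a P IH|al P IH]; intros M M' H; simpl in *.
  - auto.
  - intros [A B]. split; [eapply IH1|eapply IH2]; try eassumption; intros; apply H; apply in_or_app; auto.
  - apply IH. intros n Hn. rewrite !cnt_remove. destruct (Nat.eqb_spec n a); auto.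
    apply H. apply in_in_remove; auto.
  - apply IH. intros n Hn. simpl. specialize (H n (or_intror Hn)). lia.
  - destruct al as [a b|a x|a b|a b]; simpl in *.
    + intros [A B]. split. apply In_cnt. apply In_cnt in A. specialize (H a (or_introl eq_refl)); lia.
      eapply IH; [|eassumption]. intros n Hn; apply H; right; right; auto.
    + intros [A B]. split. apply In_cnt. apply In_cnt in A. specialize (H a (or_introl eq_refl)); lia.
      eapply IH; [|eassumption]. intros n Hn. rewrite !cnt_remove. destruct (Nat.eqb_spec n x); auto.
      apply H. right. apply in_in_remove; auto.
    + intros [A [B C]]. split; [|split].
      apply In_cnt. apply In_cnt in A. specialize (H a (or_introl eq_refl)); lia.
      apply In_cnt. apply In_cnt in B. specialize (H b (or_intror (or_introl eq_refl))); lia.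
      eapply IH; [|eassumption]. intros n Hn. rewrite !cnt_remove_one. specialize (H n (or_intror (or_intror Hn))).
      destruct (Nat.eqb n b); lia.
    + intros [A B]. split. apply In_cnt. apply In_cnt in A. specialize (H a (or_introl eq_refl)); lia.
      eapply IH; [|eassumption]. intros n Hn. simpl. specialize (H n (or_intror (or_intror Hn))). lia.
Qed.

Lemma ok_mono : forall P M M', (forall n, cnt M n <= cnt M' n) -> ok M P -> ok M' P.
Proof. intros; eapply ok_mono_fn; eauto. Qed.

Lemma ok_ext : forall P M M', (forall n, cnt M n = cnt M' n) -> (ok M P <-> ok M' P).
Proof. intros; split; apply ok_mono; intros n; rewrite H; auto. Qed.

Lemma ok_swap : forall P a b M, ok M P -> ok (map (swap a b) M) (pswap a b P).
Proof.
  induction P as [|P1 IH1 P2 IH2|c P IH|c P IH|al P IH]; intros a b M; simpl.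
  - auto.
  - intros [A B]; split; auto.
  - intros H. eapply ok_mono; [|apply IH; exact H].
    intros n. rewrite cnt_swap, !cnt_remove, cnt_swap.
    destruct (Nat.eqb_spec (swap a b n) c); destruct (Nat.eqb_spec n (swap a b c)); subst;
      rewrite ?swap_invol in *; try congruence; auto.
  - intros H. apply (IH a b) in H. exact H.
  - destruct al as [c d|c x|c d|c d]; simpl.
    + intros [A B]; split; [apply in_map; auto| apply IH; auto].
    + intros [A B]; split; [apply in_map; auto|].
      eapply ok_mono; [|apply IH; exact B].
      intros n. rewrite cnt_swap, !cnt_remove, cnt_swap.
      destruct (Nat.eqb_spec (swap a b n) x); destruct (Nat.eqb_spec n (swap a b x)); subst;
      rewrite ?swap_invol in *; try congruence; auto.
    + intros [A [B C]]; split; [apply in_map; auto|split; [apply in_map; auto|]].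
      eapply ok_mono; [|apply IH; exact C].
      intros n. rewrite cnt_swap, !cnt_remove_one, cnt_swap.
      destruct (Nat.eqb_spec (swap a b n) d); destruct (Nat.eqb_spec n (swap a b d)); subst;
      rewrite ?swap_invol in *; try congruence; auto.
    + intros [A B]; split; [apply in_map; auto| apply (IH a b) in B; exact B].
Qed.

Lemma pswap_invol : forall P a b, pswap a b (pswap a b P) = P.
Proof.
  induction P as [|P1 IH1 P2 IH2|c P IH|c P IH|al P IH]; intros a b; simpl;
    rewrite ?IH1, ?IH2, ?IH, ?swap_invol; auto.
  destruct al; simpl; rewrite !swap_invol; auto.
Qed.

Lemma swap_neq : forall a b n, n <> a -> n <> b -> swap a b n = n.
Proof. intros; unfold swap. rewrite (proj2 (Nat.eqb_neq _ _) H), (proj2 (Nat.eqb_neq _ _) H0); auto. Qed.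
Lemma swap_a : forall a b, swap a b a = b.
Proof. intros; unfold swap; rewrite Nat.eqb_refl; auto. Qed.

Lemma alpha_ok : forall P a b M, ~ In b (remove Nat.eq_dec a (fn P)) ->
  (ok (remove Nat.eq_dec a M) P <-> ok (remove Nat.eq_dec b M) (pswap a b P)).
Proof.
  intros P a b M Hb. split; intros H.
  - assert (H' : ok (map (swap a b) (map (swap a b) (remove Nat.eq_dec b M))) (pswap a b P)).
    { apply ok_swap. eapply ok_mono_fn; [|exact H].
      intros n Hn. rewrite cnt_swap, !cnt_remove.
      destruct (Nat.eqb_spec n a) as [->|Hna]. lia.
      assert (Hnb : n <> b) by (intro; subst; apply Hb, in_in_remove; auto).
      rewrite (swap_neq a b n Hna Hnb). rewrite (proj2 (Nat.eqb_neq _ _) Hnb). lia. }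
    rewrite map_map in H'. erewrite map_ext in H' by (intros; apply swap_invol).
    rewrite map_id in H'. exact H'.
  - apply (ok_swap _ a b) in H. rewrite pswap_invol in H.
    eapply ok_mono_fn; [|exact H].
    intros n Hn. rewrite cnt_swap, !cnt_remove.
    destruct (Nat.eqb_spec n a) as [->|Hna]. rewrite swap_a, Nat.eqb_refl. lia.
    assert (Hnb : n <> b) by (intro; subst; apply Hb, in_in_remove; auto).
    rewrite (swap_neq a b n Hna Hnb). rewrite (proj2 (Nat.eqb_neq _ _) Hnb). lia.
Qed.

Lemma fresh_notin : forall l, ~ In (fresh l) l.
Proof.
  intros l H. unfold fresh in H.
  assert (Hle : list_max l <= list_max l) by lia.
  apply list_max_le in Hle. rewrite Forall_forall in Hle. apply Hle in H. lia.
Qed.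

Lemma cnt_filter : forall l f n, cnt (filter f l) n = if f n then cnt l n else 0.
Proof.
  induction l as [|x l IH]; intros f n; simpl. destruct (f n); auto.
  destruct (Nat.eqb_spec x n) as [->|H].
  - destruct (f n) eqn:E; simpl; rewrite ?Nat.eqb_refl, IH, E; auto.
  - destruct (f x); simpl; rewrite IH; try rewrite (proj2 (Nat.eqb_neq _ _) H); auto; destruct (f n); auto.
Qed.

Lemma cnt_map_filter_le : forall M (s : name -> name) f y, cnt (map s (filter f M)) y <= cnt (map s M) y.
Proof.
  induction M as [|x M IH]; intros; simpl; auto.
  destruct (f x); simpl; specialize (IH s f y); lia.
Qed.

Lemma cnt_map_remove_one : forall M (s : name -> name) b y, In b M ->
  cnt (map s M) y = cnt (map s (remove_one b M)) y + (if s b =? y then 1 else 0).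
Proof.
  induction M as [|x M IH]; intros s b y Hb; simpl in *. contradiction.
  destruct (Nat.eqb_spec x b) as [->|Hxb].
  - lia.
  - destruct Hb as [->|Hb]; [congruence|]. simpl. rewrite (IH s b y Hb). lia.
Qed.

Lemma binder_step : forall P a s M,
  (forall s' M', ok M' P -> ok (map s' M') (ren s' P)) ->
  ok (remove Nat.eq_dec a M) P ->
  ok (remove Nat.eq_dec (fresh (map s (remove Nat.eq_dec a (fn P)))) (map s M))
     (ren (upd s a (fresh (map s (remove Nat.eq_dec a (fn P))))) P).
Proof.
  intros P a s M IH H.
  set (z := fresh (map s (remove Nat.eq_dec a (fn P)))).
  set (f := fun n => existsb (Nat.eqb n) (remove Nat.eq_dec a (fn P))).
  assert (Hf : forall n, f n = true <-> In n (remove Nat.eq_dec a (fn P))).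
  { intros n. unfold f. rewrite existsb_exists. split.
    - intros [m [Hm E]]. apply Nat.eqb_eq in E. subst; auto.
    - intros Hn. exists n. split; auto. apply Nat.eqb_refl. }
  set (M1 := filter f M).
  assert (H1 : ok M1 P).
  { eapply ok_mono_fn; [|exact H]. intros n Hn. unfold M1. rewrite cnt_remove, cnt_filter.
    destruct (Nat.eqb_spec n a) as [->|Hna]. lia.
    assert (f n = true) as -> by (apply Hf, in_in_remove; auto). lia. }
  apply (IH (upd s a z)) in H1.
  assert (E : map (upd s a z) M1 = map s M1).
  { apply map_ext_in. intros m Hm. unfold M1 in Hm. apply filter_In in Hm.
    destruct Hm as [_ Hm]. apply Hf in Hm. apply in_remove in Hm. unfold upd.
    rewrite (proj2 (Nat.eqb_neq _ _) (proj2 Hm)). auto. }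
  rewrite E in H1. eapply ok_mono; [|exact H1].
  intros y. rewrite cnt_remove. destruct (Nat.eqb_spec y z) as [->|Hyz].
  - rewrite cnt_notin; auto. intros Hin. apply in_map_iff in Hin. destruct Hin as [m [Em Hm]].
    unfold M1 in Hm. apply filter_In in Hm. destruct Hm as [_ Hm]. apply Hf in Hm.
    apply (fresh_notin (map s (remove Nat.eq_dec a (fn P)))). fold z. rewrite <- Em.
    apply in_map; auto.
  - apply cnt_map_filter_le.
Qed.

Lemma ok_ren : forall P s M, ok M P -> ok (map s M) (ren s P).
Proof.
  induction P as [|P1 IH1 P2 IH2|c P IH|c P IH|al P IH]; intros s M; simpl.
  - auto.
  - intros [A B]; split; auto.
  - intros H. apply binder_step; auto.
  - intros H. apply (IH s) in H. exact H.
  - destruct al as [c d|c x|c d|c d]; simpl.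
    + intros [A B]; split; [apply in_map; auto| apply IH; auto].
    + intros [A B]; split; [apply in_map; auto|]. apply binder_step; auto.
    + intros [A [B C]]; split; [apply in_map; auto|split; [apply in_map; auto|]].
      eapply ok_mono; [|apply IH; exact C].
      intros n. rewrite cnt_remove_one. rewrite (cnt_map_remove_one M s d n B).
      destruct (Nat.eqb_spec n (s d)); subst; [rewrite Nat.eqb_refl|]; try lia.
    + intros [A B]; split; [apply in_map; auto| apply (IH s) in B; exact B].
Qed.

Lemma cong_ok : forall P Q, cong P Q -> forall M, ok M P <-> ok M Q.
Proof.
  intros P Q Hc; induction Hc; intros M; simpl.
  - tauto.
  - rewrite IHHc; tauto.
  - rewrite IHHc1; auto.
  - rewrite IHHc1, IHHc2; tauto.
  - apply IHHc.
  - apply IHHc.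
  - destruct al; simpl; rewrite IHHc; tauto.
  - tauto.
  - tauto.
  - tauto.
  - tauto.
  - apply ok_ext. intros n; rewrite !cnt_remove.
    destruct (Nat.eqb n a), (Nat.eqb n b); auto.
  - assert (E : ok M P <-> ok (remove Nat.eq_dec a M) P).
    { split; apply ok_mono_fn; intros n Hn; rewrite cnt_remove;
      destruct (Nat.eqb_spec n a); subst; try contradiction; lia. }
    rewrite E; tauto.
  - apply alpha_ok. simpl in H. auto.
  - rewrite alpha_ok by exact H. tauto.
  - apply ok_ext. intros n; simpl. lia.
  - tauto.
  - tauto.
  - destruct (Nat.eq_dec b a); [congruence|]. tauto.
Qed.

Lemma auths_ok : forall l X Y, (forall M, ok M X -> ok M Y) -> forall M, ok M (auths l X) -> ok M (auths l Y).
Proof.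
  induction l as [|a l IH]; intros X Y H M; simpl; auto.
  apply IH; auto.
Qed.

Lemma subst_ok : forall Q c x N, ok (remove Nat.eq_dec x N) Q -> ok N (subst Q c x).
Proof.
  intros Q c x N H. unfold subst. apply (ok_ren _ (upd (fun n => n) x c)) in H.
  assert (E : map (upd (fun n => n) x c) (remove Nat.eq_dec x N) = remove Nat.eq_dec x N).
  { rewrite <- map_id. apply map_ext_in. intros m Hm. apply in_remove in Hm. unfold upd.
    rewrite (proj2 (Nat.eqb_neq _ _) (proj2 Hm)). auto. }
  rewrite E in H.
  eapply ok_mono; [|exact H]. intros n. rewrite cnt_remove. destruct (n =? x); lia.
Qed.

Lemma red_ok : forall P Q, red P Q -> forall M, ok M P -> ok M Q.
Proof.
  intros P Q Hr; induction Hr; intros M; simpl.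
  - intros [A B]. split.
    + revert A. apply auths_ok. intros N. simpl. tauto.
    + revert B. apply auths_ok. intros N. simpl. intros [_ B]. apply subst_ok; auto.
  - intros [A B]. split.
    + revert A. apply auths_ok. intros N. simpl. rewrite Nat.eqb_refl. tauto.
    + revert B. apply auths_ok. intros N. simpl. tauto.
  - intros [A B]; split; auto.
  - apply IHHr.
  - apply IHHr.
  - intros HP. apply (cong_ok _ _ H0). apply IHHr. apply (cong_ok _ _ H). auto.
Qed.

Lemma typed_ok : forall rho P, typed rho P -> forall M, (forall n, rho n -> In n M) -> ok M P.
Proof.
  intros rho P Ht; induction Ht; intros M HM; simpl.
  - auto.
  - split; [apply IHHt1|apply IHHt2]; intros n Hn; apply HM, H; auto.
  - apply IHHt. intros n Hn. apply in_in_remove; [intro; subst; contradiction|auto].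
  - apply IHHt. intros n Hn. destruct (Nat.eq_dec n a); [left; auto|right; apply HM, H; auto].
  - split. apply HM, H; auto. apply IHHt. intros n Hn; apply HM, H; auto.
  - split. apply HM, H0; auto. apply IHHt. intros n Hn. apply in_in_remove.
    intro; subst; contradiction. apply HM, H0; auto.
  - split. apply HM, H0; auto. split. apply HM, H0; auto.
    apply IHHt. intros n Hn. apply In_cnt. rewrite cnt_remove_one.
    assert (n <> b) by (intro; subst; contradiction).
    rewrite (proj2 (Nat.eqb_neq _ _) H1). apply In_cnt, HM, H0; auto.
  - split. apply HM, H; auto.
    apply IHHt. intros n Hn. destruct (Nat.eq_dec b n); [left; auto|right; apply HM, H; auto].
Qed.

Lemma plug_ok : forall C X M, ok M (plug C X) ->
  exists N, ok N X /\ (forall n, In n N -> In n M \/ cauth C n = true).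
Proof.
  induction C as [|R C IH|a C IH|a C IH]; intros X M; simpl.
  - intros H. exists M. split; auto.
  - intros [_ H]. apply IH in H. auto.
  - intros H. apply IH in H. destruct H as [N [HN HI]]. exists N. split; auto.
    intros n Hn. destruct (HI n Hn) as [H|H]; auto. left. apply in_remove in H. tauto.
  - intros H. apply IH in H. destruct H as [N [HN HI]]. exists N. split; auto.
    intros n Hn. destruct (HI n Hn) as [[H|H]|H]; auto.
    subst. right. rewrite Nat.eqb_refl. auto.
    destruct (n =? a); auto.
Qed.

Theorem mainTheorem8 : forall P Q : proc,
  typed (fun _ => False) P -> red_star P Q -> ~ error Q.
Proof.
  intros P Q Ht Hs.
  assert (HP : ok [] P) by (eapply typed_ok; eauto; contradiction).
  clear Ht. induction Hs.
  2:{ apply IHHs. eapply red_ok; eauto. }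
  intros [C [al [Q [Hc Herr]]]].
  apply (cong_ok _ _ Hc) in HP. apply plug_ok in HP. destruct HP as [N [HN HI]].
  assert (Hsub : In (subj al) N) by (destruct al; simpl in HN |- *; tauto).
  destruct Herr as [Hf|[b [Eal Hb]]].
  - destruct (HI _ Hsub) as [[]|H]; congruence.
  - rewrite Eal in HN. simpl in HN. destruct HN as [_ [Hbin _]].
    destruct (HI _ Hbin) as [[]|H]; congruence.
Qed.
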